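(* Let $(G,X,\alpha)$ be a $G$-Tychonoff space and $\mathcal U$ an equiuniformity on $X$. Then there exist a $G$-Tychonoff space $(H,X,\gamma)$ for which $\mathcal U$ is an equiuniformity, with $$\chi(H)\le w(\mathcal U),\quad \mathrm{ib}(H)\le\mathrm{ib}(G),\quad w(H)\le w(\mathcal U)\cdot\mathrm{ib}(G),$$ and an equivariant pair of maps $(\varphi,\mathrm{id}):(G,X,\alpha)\to(H,X,\gamma)$ with $\varphi$ an epimorphism.
   Context: All spaces are Tychonoff and all maps continuous. A $G$-space $(G,X,\alpha)$ is a topological group with a continuous action on $X$; it is $G$-Tychonoff if some compactification of $X$ carries a continuous $G$-action extending $\alpha$. Uniformities are families of open covers; $w(\mathcal U)$ is the least cardinality of a base. An equiuniformity is a uniformity which is saturated ($gu\in\mathcal U$ for all $g\in G,u\in\mathcal U$) and bounded (for each $u\in\mathcal U$ there are a neighborhood $O$ of the unit and $v\in\mathcal U$ with $\{OV:V\in v\}$ refining $u$). An equivariant pair $(\varphi,\mathrm{id})$ is a continuous homomorphism $\varphi:G\to H$ with $\alpha(g,x)=\gamma(\varphi(g),x)$. $\mathrm{ib}(G)$ is the least infinite cardinal $\tau$ such that for each neighborhood $U$ of the unit there is $A\subset G$, $|A|\le\tau$, with $AU=G$. *)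

(* Defs.v *)
From HB Require Import structures.
From mathcomp Require Import all_boot all_order all_algebra.
From mathcomp Require Import all_classical all_reals topology.
From mathcomp Require Import Rstruct Rstruct_topology.
Set Implicit Arguments. Unset Strict Implicit. Unset Printing Implicit Defensive.
Local Open Scope classical_set_scope.

Definition tychonoff (X : topologicalType) : Prop :=
  accessible_space X /\
  forall (x : X) (B : set X), closed B -> ~ B x ->
    exists f : X -> Rdefinitions.R,
      continuous f /\ f x = 0%R /\ (forall y, B y -> f y = 1%R).

(* (Hausdorff = Tychonoff) topological group with operations mul, inv, unit e. *)
Definition is_topgroup (G : topologicalType) (mul : G -> G -> G) (inv : G -> G)
  (e : G) : Prop :=
  [/\ (forall a b c, mul a (mul b c) = mul (mul a b) c),
      (forall a, mul e a = a),
      (forall a, mul (inv a) a = e) &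
      [/\ continuous (fun p : G * G => mul p.1 p.2),
      continuous inv & tychonoff G]].

Definition is_action (G : topologicalType) (mul : G -> G -> G) (e : G)
  (X : topologicalType) (alpha : G -> X -> X) : Prop :=
  [/\ (forall x, alpha e x = x),
      (forall g h x, alpha (mul g h) x = alpha g (alpha h x)) &
      continuous (fun p : G * X => alpha p.1 p.2)].

Definition G_space (G : topologicalType) mul inv (e : G)
  (X : topologicalType) (alpha : G -> X -> X) : Prop :=
  [/\ is_topgroup mul inv e, tychonoff X & is_action mul e alpha].

Definition compactification (X K : topologicalType) (j : X -> K) : Prop :=
  [/\ hausdorff_space K, compact [set: K], continuous j, injective j &
   [/\ (forall U : set X, open U -> exists V : set K, open V /\ j @` U = range j `&` V)
    & dense (range j)]].

Definition G_tychonoff (G : topologicalType) mul inv (e : G)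
  (X : topologicalType) (alpha : G -> X -> X) : Prop :=
  G_space mul inv e alpha /\
  exists (K : topologicalType) (j : X -> K) (beta : G -> K -> K),
    [/\ compactification j, is_action mul e beta &
        forall g x, beta g (j x) = j (alpha g x)].

Definition open_cover (X : topologicalType) (u : set (set X)) : Prop :=
  (forall V, u V -> open V) /\ (forall x, exists2 V, u V & V x).

Definition refines (X : Type) (u v : set (set X)) : Prop :=
  forall V, u V -> exists2 W, v W & V `<=` W.

Definition star (X : Type) (A : set X) (u : set (set X)) : set X :=
  [set y | exists V, [/\ u V, V `&` A !=set0 & V y]].

Definition star_refines (X : Type) (v u : set (set X)) : Prop :=
  forall V, v V -> exists2 W, u W & star V v `<=` W.

Definition covering_uniformity (X : topologicalType) (U : set (set (set X))) : Prop :=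
  [/\ U !=set0,
      (forall u, U u -> open_cover u),
      (forall u v, U u -> open_cover v -> refines u v -> U v) &
   [/\
      (forall u v, U u -> U v -> exists2 w, U w & refines w u /\ refines w v),
      (forall u, U u -> exists2 v, U v & star_refines v u) &
      (forall (x : X) (O : set X), nbhs x O ->
         exists2 u, U u & star [set x] u `<=` O)]].

Definition is_ubase (X : Type) (U B : set (set (set X))) : Prop :=
  B `<=` U /\ forall u, U u -> exists2 v, B v & refines v u.

Definition act_set (G X : Type) (alpha : G -> X -> X) (O : set G) (V : set X) : set X :=
  [set z | exists g y, [/\ O g, V y & z = alpha g y]].

Definition equiuniformity (G : topologicalType) (e : G) (X : topologicalType)
  (alpha : G -> X -> X) (U : set (set (set X))) : Prop :=
  [/\ covering_uniformity U,
      (forall g u, U u -> U [set alpha g @` V | V in u]) &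
      (forall u, U u -> exists O v, [/\ nbhs e O, U v &
          refines [set act_set alpha O V | V in v] u])].

Definition is_local_base (T : topologicalType) (x : T) (L : set (set T)) : Prop :=
  (forall O, L O -> open_nbhs x O) /\
  (forall N, nbhs x N -> exists2 O, L O & O `<=` N).

Definition is_top_base (T : topologicalType) (BB : set (set T)) : Prop :=
  (forall O, BB O -> open O) /\
  (forall W, open W -> forall x, W x -> exists2 O, BB O & O x /\ O `<=` W).

(* G is |S|-narrow: for every neighbourhood N of e there is A with |A| <= |S|
   and A N = G.  For S infinite, this holds iff ib(G) <= |S|. *)
Definition narrow (G : topologicalType) (mul : G -> G -> G) (e : G)
  (I : Type) (S : set I) : Prop :=
  forall N, nbhs e N -> exists A : set G,
    (A #<= S)%card /\ forall g, exists a n, [/\ A a, N n & g = mul a n].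

(* Main.v *)
Require Import Defs.
From HB Require Import structures.
From mathcomp Require Import all_boot all_order all_algebra.
From mathcomp Require Import all_classical all_reals topology.
From mathcomp Require Import all_analysis.
From mathcomp Require Import Rstruct Rstruct_topology.
From mathcomp Require Import lra.
Set Implicit Arguments. Unset Strict Implicit. Unset Printing Implicit Defensive.
Import Order.TTheory GRing.Theory Num.Theory.
Local Open Scope classical_set_scope.


Definition Eu {X : Type} (u : set (set X)) : set (X * X) :=
  [set xy | exists2 V, u V & V xy.1 /\ V xy.2].

Section cover_unif.
Context (X : topologicalType) (U : set (set (set X))) (hU : covering_uniformity U).

Lemma Eu_refl u x : U u -> Eu u (x, x).
Proof.
case: hU => _ cov _ _ Uu; have [_ /(_ x) [V uV Vx]] := cov u Uu.
by exists V.
Qed.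

Lemma Eu_sym (u : set (set X)) x y : Eu u (x, y) -> Eu u (y, x).
Proof. by case=> V uV [? ?]; exists V. Qed.

Lemma Eu_refine (u v : set (set X)) : refines u v -> Eu u `<=` Eu v.
Proof. by move=> ruv [a b] [V /ruv [W vW VW] [/= Va Vb]]; exists W => //; split; apply: VW. Qed.

Lemma Eu_split u : U u -> exists2 w, U w &
  forall a b c, Eu w (a, b) -> Eu w (b, c) -> Eu u (a, c).
Proof.
case: hU => _ _ _ [_ st _] Uu; have [w Uw sw] := st u Uu.
exists w => // a b c [V1 wV1 [/= V1a V1b]] [V2 wV2 [/= V2b V2c]].
have [W uW sW] := sw V2 wV2; exists W => //; split => /=.
  by apply: sW; exists V1; split => //; exists b.
by apply: sW; exists V2; split => //; exists b.
Qed.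

Lemma Eu_meet u v : U u -> U v -> exists2 w, U w &
  (forall p, Eu w p -> Eu u p /\ Eu v p).
Proof.
case: hU => _ _ _ [mt _ _] Uu Uv; have [w Uw [ru rv]] := mt u v Uu Uv.
by exists w => // p wp; split; apply: Eu_refine wp.
Qed.

Lemma Eu_compat x (O : set X) : nbhs x O ->
  exists2 u, U u & forall y, Eu u (x, y) -> O y.
Proof.
case: hU => _ _ _ [_ _ cp] /cp [u Uu sO]; exists u => // y [V uV [Vx Vy]].
by apply: sO; exists V; split => //; exists x.
Qed.

Lemma Eu_nbhs u x : U u -> nbhs x [set y | Eu u (x, y)].
Proof.
case: hU => _ cov _ _ Uu; have [oV /(_ x) [V uV Vx]] := cov u Uu.
apply: (@filterS _ _ _ V); first by move=> y Vy; exists V.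
by apply: open_nbhs_nbhs; split => //; apply: oV.
Qed.

End cover_unif.

Section grp.
Context (G : Type) (mul : G -> G -> G) (inv : G -> G) (e : G).
Context (mA : forall a b c, mul a (mul b c) = mul (mul a b) c)
  (m1 : forall a, mul e a = a) (mV : forall a, mul (inv a) a = e).

Lemma mulgV' a : mul a (inv a) = e.
Proof.
set b := inv a.
rewrite -[mul a b]m1 -(mV b) -mA [mul b (mul a b)]mA -/b.
by rewrite /b mV m1 mV.
Qed.

Lemma mulg1' a : mul a e = a.
Proof. by rewrite -(mV a) mA mulgV' m1. Qed.

Lemma invgK' a : inv (inv a) = a.
Proof. by rewrite -[inv (inv a)]mulg1' -(mV a) mA mV m1. Qed.

Lemma invgM' a b : inv (mul a b) = mul (inv b) (inv a).
Proof.
have h : mul (mul (inv b) (inv a)) (mul a b) = e.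
  by rewrite -mA [mul (inv a) _]mA mV m1 mV.
by rewrite -[inv (mul a b)]m1 -h -mA mulgV' mulg1'.
Qed.
End grp.

Module MP4.
Import numFieldNormedType.Exports.
Import Num.Def.
Local Open Scope ring_scope.

Lemma ptws_cvgP (I : Type) (T : topologicalType)
  (F : set_system (prod_topology (fun _ : I => T))) (f : prod_topology (fun _ : I => T)) :
  Filter F -> (forall i, (fun g => g i) @ F --> f i) -> F --> f.
Proof.
move=> FF hi; apply/cvg_sup => i A /=.
rewrite (@nbhsE (initial_topology (fun g : prod_topology (fun _ : I => T) => g i))).
case=> O [[B oB <-] Bt] sOA; rewrite nbhs_simpl.
have FO : F ((fun g => g i) @^-1` B).
  by apply: (hi i); apply: open_nbhs_nbhs; split.
exact: (@filterS _ F FF _ _ sOA FO).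
Qed.

Section unif_sep.
Context (X : topologicalType) (U : set (set (set X))) (hU : covering_uniformity U).
Local Notation R := Rdefinitions.R.

Definition unifc (f : X -> R) := forall eps : R, 0 < eps ->
  exists2 u, U u & forall a b, Eu u (a, b) -> `|f a - f b| < eps.

Lemma unifc_cont f : unifc f -> continuous f.
Proof.
move=> uf x A /= /nbhs_ballP [e e0 eA].
have [u Uu hu] := uf e e0.
apply: filterS (Eu_nbhs hU x Uu) => y /hu fy; apply: eA.
by rewrite /ball /=.
Qed.

Definition Xu : Type := X.
HB.instance Definition _ := Choice.on Xu.
Definition entX : set_system (Xu * Xu) := filter_from U Eu.

Lemma entX_filter : Filter entX.
Proof.
apply: filter_from_filter; first by case: hU => -[u Uu] _ _ _; exists u.
move=> u v Uu Uv; have [w Uw wuv] := Eu_meet hU Uu Uv.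
by exists w => // p /wuv.
Qed.

Local Open Scope relation_scope.
Lemma entX_refl A : entX A -> diagonal `<=` A.
Proof. by case=> u Uu DA [a b] /diagonalP /= <-; apply: DA; exact: Eu_refl hU _ _ Uu. Qed.
Lemma entX_inv A : entX A -> entX A^-1.
Proof. by case=> u Uu DA; exists u => // -[a b] /Eu_sym /DA. Qed.
Lemma entX_split A : entX A -> exists2 B, entX B & B \; B `<=` A.
Proof.
case=> u Uu DA; have [w Uw sw] := Eu_split hU Uu.
by exists (Eu w); [exists w | case=> a c [b /= h1 h2]; apply: DA; exact: sw h1 h2].
Qed.
Local Close Scope relation_scope.

HB.instance Definition _ := @isUniform.Build Xu entX entX_filter entX_refl
  entX_inv entX_split.


Lemma min_lip (s t e : R) : `|minr s e - minr t e| <= `|s - t|.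
Proof.
have n1 := ler_norm (s - t); have n2 := ler_norm (t - s).
rewrite distrC in n2.
rewrite ler_norml; apply/andP; split; case: (leP s e) => se;
  case: (leP t e) => te;
  rewrite ?(min_l se) ?(min_r (ltW se)) ?(min_l te) ?(min_r (ltW te)); lra.
Qed.

Lemma ury (x : X) (u : set (set X)) : U u -> exists f : X -> R,
  [/\ unifc f, (forall y, 0 <= f y <= 1), f x = 0 &
      forall y, ~ Eu u (x, y) -> f y = 1].
Proof.
move=> Uu.
have entE : @entourage Xu (Eu u) by exists u.
pose T' := [the pseudoMetricType R of gauge.type entE].
have gE : forall D, @entourage T' D -> exists2 v, U v & Eu v `<=` D.
  move=> D hD; have [v Uv sv] := @gauge.gauge_ent Xu (Eu u) entE D hD.
  by exists v.
have [eps eps0 epsE] : exists2 eps : R, 0 < eps &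
    forall a b : T', ball a eps b -> Eu u (a, b).
  have : @entourage T' (Eu u) by exists 0%N => // p [].
  rewrite -entourage_ballE => -[e e0 sE]; exists e => // a b bab.
  exact: (sE (a, b)).
pose D (a b : X) : R := fine (@edist R T' (a, b)).
have Dfin a b : @edist R T' (a, b) = (D a b)%:E.
  rewrite /D fineK // ge0_fin_numE ?edist_ge0 //.
  apply: (@le_lt_trans _ _ 2%:E); last exact: ltry.
  apply: edist_fin => //.
  exact: countable_uniform.countable_uniform_bounded.
have D0 a : D a a = 0 by rewrite /D edist_refl.
have Dge0 a b : 0 <= D a b by apply: fine_ge0; exact: edist_ge0.
have Dtri a b c : D a c <= D a b + D b c.
  by rewrite -lee_fin EFinD -!Dfin; exact: edist_triangle.
have Dsym a b : D a b = D b a by rewrite /D edist_sym.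
have Dball a b r : 0 < r -> @ball _ T' a r b -> D a b <= r.
  by move=> r0 bab; rewrite -lee_fin -Dfin; exact: edist_fin.
have Dlt a b : D a b < eps -> Eu u (a, b).
  by move=> h; apply: epsE; apply: (@edist_lt_ball R T' eps (a, b)); rewrite Dfin lte_fin.
exists (fun y => minr (D x y) eps / eps); split.
- move=> e e0; have [d d0 dE] : exists2 d, 0 < d & d = e * eps / 2.
    by exists (e * eps / 2) => //; rewrite divr_gt0 // mulr_gt0.
  have [v Uv sv] := gE _ (entourage_ball T' (PosNum d0)).
  exists v => // a b /sv /= bab; have Dab := Dball _ _ _ d0 bab.
  rewrite -mulrBl normrM normfV (gtr0_norm eps0).
  rewrite ltr_pdivrMr //; apply: (le_lt_trans (min_lip _ _ _)).
  have h1 := Dtri x a b; have h2 := Dtri x b a; rewrite (Dsym b a) in h2.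
  have : `|D x a - D x b| <= d by rewrite ler_norml; apply/andP; split; lra.
  move/le_lt_trans; apply; rewrite dE; have := mulr_gt0 e0 eps0; lra.
- move=> y /=; case: (leP (D x y) eps) => h.
    apply/andP; split; first by apply: divr_ge0; [exact: Dge0 | exact: ltW].
    by rewrite ler_pdivrMr // mul1r.
  by rewrite divff ?gt_eqF // ler01 lexx.
- by rewrite D0 min_l ?ltW // mul0r.
- move=> y nE; rewrite min_r ?divff ?gt_eqF //.
  by rewrite leNgt; apply/negP => /Dlt.
Qed.

End unif_sep.

End MP4.
Import MP4.

Module MP5.
Import numFieldNormedType.Exports.
Import Num.Def.
Local Open Scope ring_scope.


Lemma init_cont (Y Z : topologicalType) (A : set Z) (f : Y -> set_type A) :
  (forall y, (fun z => sval (f z)) @ nbhs y --> sval (f y)) -> continuous f.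
Proof.
move=> hf y B /=.
rewrite (@nbhsE (initial_topology (@set_val Z A))).
case=> O [[W oW <-] Wt] sOA; rewrite nbhs_simpl.
have FO : nbhs y [set z | W (sval (f z))].
  by apply: (hf y); apply: open_nbhs_nbhs; split.
by apply: filterS FO => z Wz; apply: sOA.
Qed.

Section compactif.
Context (X : topologicalType) (U : set (set (set X))) (hU : covering_uniformity U)
  (hX : Defs.tychonoff X).
Context (Hh : topologicalType) (mH : Hh -> Hh -> Hh) (eH : Hh) (act : Hh -> X -> X).
Context (act1 : forall x, act eH x = x)
  (actM : forall g h x, act (mH g h) x = act g (act h x))
  (act_unif : forall h u, U u -> exists2 w, U w &
     forall a b, Eu w (a, b) -> Eu u (act h a, act h b))
  (act_near : forall h0 u, U u ->
     nbhs h0 [set h | forall x, Eu u (act h0 x, act h x)]).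
Local Notation R := Rdefinitions.R.

Definition Ity := {f : X -> R | unifc U f /\ forall x, 0 <= f x <= 1}.
HB.instance Definition _ := gen_eqMixin Ity.
HB.instance Definition _ := gen_choiceMixin Ity.

Lemma Iext (i k : Ity) : sval i = sval k -> i = k.
Proof. by case: i k => [f pf] [f' pf'] /= ef; subst f'; congr exist. Qed.

Definition PU := prod_topology (fun _ : Ity => R).
Definition fam (i : Ity) : X -> R := sval i.
Definition jp (x : X) : PU := join_product fam x.
Definition Cl : set PU := closure (range jp).

Lemma fam_cont i : continuous (fam i).
Proof. by apply: (unifc_cont hU); case: (svalP i). Qed.

Lemma sepf : separate_points_from_closed fam.
Proof.
move=> C x clC nCx.
have nO : nbhs x (~` C) by apply: open_nbhs_nbhs; split => //; exact: closed_openC.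
have [u Uu uO] := Eu_compat hU nO.
have [f [uf f01 fx f1]] := ury hU x Uu.
exists (exist _ f (conj uf f01)); rewrite /fam /=.
have cl1 : closed [set (1 : R)].
  by apply: accessible_closed_set1; apply: hausdorff_accessible; exact: Rhausdorff.
have sC : f @` C `<=` [set 1] by move=> _ [y Cy <-]; apply: f1 => /uO.
have e1 := (closure_id _).1 cl1.
move=> /(closureS sC); rewrite -e1 fx => /eqP; rewrite eq_sym oner_eq0.
done.
Qed.

Lemma jp_cont : continuous jp.
Proof. exact: join_product_continuous sepf fam_cont. Qed.

Lemma jp_inj : injective jp.
Proof.
move=> x y; have acc : accessible_space X by case: hX.
by move/(join_product_inj sepf acc); apply; rewrite in_setT.
Qed.

Definition Kt := set_type Cl.

Definition jK (x : X) : Kt := exist _ (jp x) (mem_set (subset_closure (imageT jp x))).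


Lemma PU_hausdorff : hausdorff_space PU.
Proof. by apply: hausdorff_product => _; exact: Rhausdorff. Qed.

Lemma Cl_compact : compact Cl.
Proof.
pose Iset : set R := `[(0 : R), 1]%classic.
pose B := [set f : PU | forall i, Iset (f i)].
have cI : forall i : Ity, compact Iset by move=> _; exact: segment_compact.
have cB : compact B.
  have := @tychonoff Ity (fun _ => R) (fun _ => Iset) cI.
  by [].
apply: (subclosed_compact _ cB); first exact: closed_closure.
rewrite ((closure_id B).1 (compact_closed PU_hausdorff cB)).
apply: closureS => _ [x _ <-] i; rewrite /Iset /= in_itv /=.
by case: (svalP i) => _ /(_ x).
Qed.

Lemma K_hausdorff : hausdorff_space Kt.
Proof.
move=> p q clpq; apply: val_inj; apply: PU_hausdorff => A B nA nB.
have nA' : nbhs p (sval @^-1` A).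
  exact: (@initial_continuous _ _ (@set_val PU Cl) p _ nA).
have nB' : nbhs q (sval @^-1` B).
  exact: (@initial_continuous _ _ (@set_val PU Cl) q _ nB).
by have [k [Ak Bk]] := clpq _ _ nA' nB'; exists (sval k).
Qed.

Lemma K_compact : compact [set: Kt].
Proof.
move=> F PF _.
have FCl : (sval @ F) Cl.
  by rewrite /= ; apply: filterS (filterT) => k _; apply/set_mem/(svalP k).
have [p [Clp clp]] := Cl_compact (fmap_proper_filter sval PF) FCl.
exists (exist _ p (mem_set Clp)); split => // A B FA.
rewrite (@nbhsE (initial_topology (@set_val PU Cl))).
case=> O [[W oW <-] Wp] sOB.
have FA' : (sval @ F) (sval @` A).
  by rewrite /=; apply: filterS FA => k Ak; exists k.
have [z [[a Aa <-] Wa]] := clp _ _ FA' (open_nbhs_nbhs (conj oW Wp)).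
by exists a; split => //; apply: sOB.
Qed.

Lemma jK_cont : continuous jK.
Proof. by apply: init_cont => y; exact: jp_cont. Qed.

Lemma jK_inj : injective jK.
Proof. by move=> x y /(congr1 sval) /jp_inj. Qed.

Lemma jK_open (O : set X) : open O ->
  exists V : set Kt, open V /\ jK @` O = range jK `&` V.
Proof.
move=> oO; have := join_product_open sepf oO.
case/open_subspaceP => V oV VE.
exists (sval @^-1` V); split; first by exists V.
apply/seteqP; split.
  move=> _ [x Ox <-]; split; first by exists x.
  have : (join_product fam @` O `&` range (join_product fam)) (jp x).
    by split; [exists x | exists x].
  by rewrite -VE => -[].
move=> _ [[x _ <-] /= Vx].
have : (V `&` range (join_product fam)) (jp x) by split => //; exists x.
by rewrite VE => -[[x' Ox' /jp_inj ex'] _]; exists x' => //; rewrite ex'.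
Qed.

Lemma jK_dense : dense (range jK).
Proof.
move=> O [p Op] [W oW WO].
have Clp : Cl (sval p) by apply/set_mem/(svalP p).
have Wp : W (sval p) by rewrite -WO in Op.
have [_ [[x _ <-] Wx]] := Clp _ (open_nbhs_nbhs (conj oW Wp)).
by exists (jK x); split; [rewrite -WO | exists x].
Qed.

Lemma jK_compactification : compactification jK.
Proof.
split; [exact: K_hausdorff | exact: K_compact | exact: jK_cont | exact: jK_inj |].
by split; [exact: jK_open | exact: jK_dense].
Qed.


Lemma comp_ok h (i : Ity) :
  unifc U (sval i \o act h) /\ forall x, 0 <= (sval i \o act h) x <= 1.
Proof.
case: (svalP i) => ui i01; split => [e e0|x]; last exact: i01.
have [u Uu hu] := ui e e0; have [w Uw hw] := act_unif h Uu.
by exists w => // a b /hw /hu.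
Qed.

Definition comp_i h (i : Ity) : Ity := exist _ _ (comp_ok h i).
Definition actP h (p : PU) : PU := fun i => p (comp_i h i).

Lemma actP_cont h : continuous (actP h).
Proof.
move=> p; apply: ptws_cvgP => i.
exact: (@proj_continuous Ity (fun _ => R) (comp_i h i) p).
Qed.

Lemma actP_jp h x : actP h (jp x) = jp (act h x).
Proof. by []. Qed.

Lemma actP_Cl h p : Cl p -> Cl (actP h p).
Proof.
move=> Clp B nB; have := actP_cont nB => /= nB'.
have [_ [[x _ <-] Bx]] := Clp _ nB'.
by exists (jp (act h x)); split => //; exists (act h x).
Qed.

Definition beta h (k : Kt) : Kt :=
  exist _ (actP h (sval k)) (mem_set (@actP_Cl h _ (set_mem (svalP k)))).

Lemma beta_jK h x : beta h (jK x) = jK (act h x).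
Proof. exact: val_inj. Qed.

Lemma comp_i1 i : comp_i eH i = i.
Proof. by apply: Iext; apply: funext => x /=; rewrite act1. Qed.

Lemma comp_iM g h i : comp_i (mH g h) i = comp_i h (comp_i g i).
Proof. by apply: Iext; apply: funext => x /=; rewrite actM. Qed.

Lemma beta1 k : beta eH k = k.
Proof.
apply: val_inj; apply: functional_extensionality_dep => i /=.
by rewrite /actP comp_i1.
Qed.

Lemma betaM g h k : beta (mH g h) k = beta g (beta h k).
Proof.
apply: val_inj; apply: functional_extensionality_dep => i /=.
by rewrite /actP comp_iM.
Qed.


Lemma coord_cont (c : Ity) (k0 : Kt) (r : R) : 0 < r ->
  nbhs k0 [set k : Kt | ball (sval k0 c) r (sval k c)].
Proof.
move=> r0.
have h1 := @initial_continuous _ _ (@set_val PU Cl) k0.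
have h2 := @proj_continuous Ity (fun _ => R) c (sval k0).
have := cvg_comp _ _ h1 h2 _ (nbhsx_ballx (sval k0 c) r r0).
by [].
Qed.

Lemma coordPU (c : Ity) (p : PU) (r : R) : 0 < r ->
  nbhs p [set q : PU | ball (p c) r (q c)].
Proof.
move=> r0; have h2 := @proj_continuous Ity (fun _ => R) c p.
exact: (h2 _ (nbhsx_ballx (p c) r r0)).
Qed.

Lemma beta_cont : continuous (fun z : Hh * Kt => beta z.1 z.2).
Proof.
apply: init_cont => -[h0 k0]; apply: ptws_cvgP => i /=.
move=> A /nbhs_ballP [e e0 eA].
have e4 : 0 < e / 4 by rewrite divr_gt0.
have e8 : 0 < e / 8 by rewrite divr_gt0.
have [u Uu hu] := (svalP i).1 (e / 4) e4.
set c0 := comp_i h0 i.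
exists ([set h | forall x, Eu u (act h0 x, act h x)],
        [set k : Kt | ball (sval k0 c0) (e / 4) (sval k c0)]).
  by split; [exact: act_near | exact: coord_cont].
case=> h k [/= Ph Qk]; apply: eA.
set ch := comp_i h i; set p := sval k.
have Clp : Cl p by apply/set_mem/(svalP k).
have nN : nbhs p ([set q : PU | ball (p c0) (e / 8) (q c0)]
    `&` [set q : PU | ball (p ch) (e / 8) (q ch)]).
  by apply: filterI; exact: coordPU.
have [_ [[x _ <-] [/= b1 b2]]] := Clp _ nN.
have b3 := hu _ _ (Ph x).
move: Qk b1 b2 b3; rewrite /ball /= /c0 /ch /p /actP /jp /join_product /fam /=.
rewrite !ltr_distl => /andP[q1 q2] /andP[q3 q4] /andP[q5 q6] /andP[q7 q8].
apply/andP; split; lra.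
Qed.

Lemma K_exists : exists (K : topologicalType) (j : X -> K) (bt : Hh -> K -> K),
  [/\ compactification j, is_action mH eH bt &
      forall g x, bt g (j x) = j (act g x)].
Proof.
exists Kt, jK, beta; split.
- exact: jK_compactification.
- by split; [exact: beta1 | exact: betaM | exact: beta_cont].
- exact: beta_jK.
Qed.

End compactif.

End MP5.
Import MP5.

Section main.
Context (G : topologicalType) (mulG : G -> G -> G) (invG : G -> G)
  (eG : G) (X : topologicalType) (alpha : G -> X -> X) (U : set (set (set X))).
Context (hTG : is_topgroup mulG invG eG) (hact : is_action mulG eG alpha)
  (hX : Defs.tychonoff X) (hEq : equiuniformity eG alpha U).

Let hU : covering_uniformity U. Proof. by case: hEq. Qed.

Let mA : forall a b c, mulG a (mulG b c) = mulG (mulG a b) c.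
Proof. by case: hTG. Qed.
Let m1 : forall a, mulG eG a = a. Proof. by case: hTG. Qed.
Let mV : forall a, mulG (invG a) a = eG. Proof. by case: hTG. Qed.

Lemma act1 x : alpha eG x = x. Proof. by case: hact. Qed.
Lemma actM g h x : alpha (mulG g h) x = alpha g (alpha h x). Proof. by case: hact. Qed.
Lemma actVK g x : alpha g (alpha (invG g) x) = x.
Proof. by rewrite -actM (mulgV' mA m1 mV) act1. Qed.
Lemma actKV g x : alpha (invG g) (alpha g x) = x.
Proof. by rewrite -actM mV act1. Qed.

Lemma Eu_img g u a b : Eu u (a, b) ->
  Eu [set alpha g @` V | V in u] (alpha g a, alpha g b).
Proof.
case=> V uV [/= Va Vb]; exists (alpha g @` V); first by exists V.
by split; [exists a | exists b].
Qed.

Lemma sat g u : U u -> U [set alpha g @` V | V in u].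
Proof. by case: hEq => _ s _; apply: s. Qed.

Lemma act_unif g u : U u -> exists2 w, U w &
  forall a b, Eu w (a, b) -> Eu u (alpha g a, alpha g b).
Proof.
move=> Uu; exists [set alpha (invG g) @` V | V in u]; first exact: sat.
move=> a b [_ [V uV <-] [/= [a' Va' ea] [b' Vb' eb]]].
by exists V => //; rewrite -ea -eb !actVK.
Qed.

Definition Hty := {f : X -> X | exists g, f = alpha g}.
HB.instance Definition _ := gen_eqMixin Hty.
HB.instance Definition _ := gen_choiceMixin Hty.

Lemma Hext (h k : Hty) : sval h = sval k -> h = k.
Proof. by case: h k => [f pf] [f' pf'] /= ef; subst f'; congr exist. Qed.

Definition rep (h : Hty) : G := projT1 (cid (svalP h)).
Lemma repP h : sval h = alpha (rep h).
Proof. exact: (projT2 (cid (svalP h))). Qed.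

Definition DH (u : set (set X)) : set (Hty * Hty) :=
  [set hk | forall x, Eu u (sval hk.1 x, sval hk.2 x)].

Definition entH := filter_from U DH.

Lemma entH_filter : Filter entH.
Proof.
apply: filter_from_filter; first by case: hU => -[u Uu] _ _ _; exists u.
move=> u v Uu Uv; have [w Uw wuv] := Eu_meet hU Uu Uv.
by exists w => // hk Dw; split => x; have [] := wuv _ (Dw x).
Qed.

Local Open Scope relation_scope.
Lemma entH_refl A : entH A -> diagonal `<=` A.
Proof.
case=> u Uu DA [h k] /diagonalP /= hk; apply: DA; rewrite /DH /= -hk => x.
exact: Eu_refl hU _ _ Uu.
Qed.

Lemma entH_inv A : entH A -> entH A^-1.
Proof.
case=> u Uu DA; exists u => // -[h k] Dhk; apply: DA => x /=.
exact/Eu_sym/Dhk.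
Qed.

Lemma entH_split A : entH A -> exists2 B, entH B & B \; B `<=` A.
Proof.
case=> u Uu DA; have [w Uw sw] := Eu_split hU Uu.
exists (DH w); first by exists w.
case=> h k [l /= D1 D2]; apply: DA => x /=; exact: sw (D1 x) (D2 x).
Qed.
Local Close Scope relation_scope.

HB.instance Definition _ := @isUniform.Build Hty entH entH_filter entH_refl
  entH_inv entH_split.

Lemma nbhsH (h : Hty) (A : set Hty) : nbhs h A <->
  exists2 u, U u & (forall k, (forall x, Eu u (sval h x, sval k x)) -> A k).
Proof.
rewrite -nbhs_entourageE; split.
  case=> B [u Uu DB] BA; exists u => // k Dk; apply: BA.
  by rewrite /xsection /=; apply/mem_set/DB.
case=> u Uu DA; exists (DH u); first by exists u.
by move=> k /=; rewrite /xsection /= => /set_mem; apply: DA.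
Qed.


Definition mulH (h k : Hty) : Hty :=
  exist _ (alpha (mulG (rep h) (rep k))) (ex_intro _ _ erefl).
Definition invH (h : Hty) : Hty :=
  exist _ (alpha (invG (rep h))) (ex_intro _ _ erefl).
Definition eH : Hty := exist _ (alpha eG) (ex_intro _ _ erefl).
Definition phi (g : G) : Hty := exist _ (alpha g) (ex_intro _ _ erefl).
Definition gam (h : Hty) (x : X) : X := sval h x.

Lemma valM h k x : sval (mulH h k) x = sval h (sval k x).
Proof. by rewrite /= actM -!repP. Qed.
Lemma valVK h x : sval h (sval (invH h) x) = x.
Proof. by rewrite /= repP actVK. Qed.
Lemma valKV h x : sval (invH h) (sval h x) = x.
Proof. by rewrite /= repP actKV. Qed.
Lemma valE x : sval eH x = x.
Proof. exact: act1. Qed.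

Lemma H_assoc a b c : mulH a (mulH b c) = mulH (mulH a b) c.
Proof. by apply: Hext; apply: funext => x; rewrite !valM. Qed.
Lemma H_id a : mulH eH a = a.
Proof. by apply: Hext; apply: funext => x; rewrite valM valE. Qed.
Lemma H_inv a : mulH (invH a) a = eH.
Proof. by apply: Hext; apply: funext => x; rewrite valM valKV valE. Qed.

Lemma phiM g h : phi (mulG g h) = mulH (phi g) (phi h).
Proof. by apply: Hext; apply: funext => x; rewrite valM /= actM. Qed.
Lemma phi_surj h : exists g, phi g = h.
Proof. by exists (rep h); apply: Hext; rewrite /= repP. Qed.
Lemma phi_equiv g x : alpha g x = gam (phi g) x.
Proof. by []. Qed.

Lemma cont2P (T1 T2 Y : topologicalType) (f : T1 * T2 -> Y) :
  (forall p A, nbhs (f p) A -> exists P Q, [/\ nbhs p.1 P, nbhs p.2 Q &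
     forall a b, P a -> Q b -> A (f (a, b))]) -> continuous f.
Proof.
move=> hf p A /hf [P [Q [nP nQ PQ]]]; exists (P, Q) => //=.
by case=> a b [/= Pa Qb]; apply: PQ.
Qed.

Let hmulc : continuous (fun p : G * G => mulG p.1 p.2).
Proof. by case: hTG => _ _ _ []. Qed.
Let hactc : continuous (fun p : G * X => alpha p.1 p.2).
Proof. by case: hact. Qed.

Lemma mulr_cont c : continuous (fun g => mulG g c).
Proof.
move=> g.
have h1 : (fun g => (g, c)) @ nbhs g --> nbhs (g, c).
  by apply: cvg_pair => //; exact: cvg_cst.
exact: (cvg_comp _ _ h1 (@hmulc (g, c))).
Qed.

Lemma act_cont g : continuous (alpha g).
Proof.
move=> x.
have h1 : (fun x => (g, x)) @ nbhs x --> nbhs (g, x).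
  by apply: cvg_pair => //; exact: cvg_cst.
exact: (cvg_comp _ _ h1 (@hactc (g, x))).
Qed.

Lemma Mu_nbhs u : U u -> nbhs eG [set m | forall y, Eu u (y, alpha m y)].
Proof.
move=> Uu; case: hEq => _ _ bd; have [Oe [v [nO Uv rf]]] := bd u Uu.
have Oee : Oe eG := nbhs_singleton nO.
apply: filterS nO => m Om y.
have [_ /(_ y) [V vV Vy]] : open_cover v by case: hU => _ cov _ _; exact: cov.
have [W uW sW] := rf (act_set alpha Oe V) (ex_intro2 _ _ V vV erefl).
exists W => //; split; apply: sW.
  by exists eG, y; split => //; rewrite act1.
by exists m, y.
Qed.

Lemma phi_cont : continuous phi.
Proof.
move=> g0 A /= /nbhsH [u Uu uA].
have nM0 := Mu_nbhs Uu; rewrite -(mulgV' mA m1 mV g0) in nM0.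
have nM : nbhs g0 [set g | forall y, Eu u (y, alpha (mulG g (invG g0)) y)]
  := @mulr_cont (invG g0) g0 _ nM0.
apply: filterS nM => g Mg; apply: uA => x /=.
have -> : g = mulG (mulG g (invG g0)) g0 by rewrite -mA mV (mulg1' mA m1 mV).
by rewrite actM; apply: Mg.
Qed.

Lemma ball_nbhs (h : Hty) u : U u ->
  nbhs h [set k : Hty | forall x, Eu u (sval h x, sval k x)].
Proof. by move=> Uu; apply/nbhsH; exists u. Qed.

Lemma mulH_cont : continuous (fun p : Hty * Hty => mulH p.1 p.2).
Proof.
apply: cont2P => -[h0 k0] A /= /nbhsH [u Uu uA].
have [w Uw sw] := Eu_split hU Uu.
have [w' Uw' hw'] := act_unif (rep h0) Uw.
exists [set h : Hty | forall x, Eu w (sval h0 x, sval h x)],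
  [set k : Hty | forall x, Eu w' (sval k0 x, sval k x)].
split; [exact: ball_nbhs | exact: ball_nbhs|].
move=> h k Ph Qk; apply: uA => x; rewrite !valM.
apply: (sw _ (sval h0 (sval k x))); last exact: Ph.
by rewrite repP; apply: hw'.
Qed.

Lemma invH_cont : continuous invH.
Proof.
move=> h0 A /= /nbhsH [u Uu uA].
have [w Uw hw] := act_unif (invG (rep h0)) Uu.
apply: filterS (ball_nbhs h0 Uw) => h Ph; apply: uA => x.
set y := sval (invH h) x.
have -> : x = sval h y by rewrite /y valVK.
have := hw _ _ (Eu_sym (Ph y)); rewrite (repP h0) actKV.
by [].
Qed.

Lemma H_hausdorff : hausdorff_space Hty.
Proof.
move=> p q clpq; apply: Hext; apply: funext => x; apply/eqP/negP => /negP pq.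
have [Ob [oO /set_mem Ox /set_mem nOx]] : exists A : set X,
   [/\ open A, sval p x \in A & sval q x \in ~` A].
  by case: hX => acc _; apply: acc.
have [u Uu uO] := Eu_compat hU (open_nbhs_nbhs (conj oO Ox)).
have [w Uw sw] := Eu_split hU Uu.
have [k [Pk Qk]] := clpq _ _ (ball_nbhs p Uw) (ball_nbhs q Uw).
by apply: nOx; apply: uO; apply: sw (Pk x) (Eu_sym (Qk x)).
Qed.


Lemma H_tych : Defs.tychonoff Hty.
Proof.
split; first exact: hausdorff_accessible H_hausdorff.
move=> x B clB nBx.
have hs := @uniform_completely_regular Rdefinitions.R Hty x B clB nBx.
have [f [cf _ f0 f1]] := (@uniform_separatorP Hty Rdefinitions.R [set x] B).1 hs.
exists f; split => //; split; first by have := f0 (f x); apply; exists x.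
by move=> y By; have := f1 (f y); apply; exists y.
Qed.

Lemma H_topgroup : is_topgroup mulH invH eH.
Proof.
split; [exact: H_assoc | exact: H_id | exact: H_inv |].
by split; [exact: mulH_cont | exact: invH_cont | exact: H_tych].
Qed.

Lemma gam_cont : continuous (fun p : Hty * X => gam p.1 p.2).
Proof.
apply: cont2P => -[h0 x0] A /= nA.
have [u Uu uA] := Eu_compat hU nA.
have [w Uw sw] := Eu_split hU Uu.
exists [set h : Hty | forall x, Eu w (sval h0 x, sval h x)],
  [set x | Eu w (sval h0 x0, sval h0 x)].
split; first exact: ball_nbhs.
  rewrite /= (repP h0).
  exact: (@act_cont (rep h0) x0 _ (Eu_nbhs hU (alpha (rep h0) x0) Uw)).
move=> h x Ph Qx; apply: uA; apply: sw Qx (Ph x).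
Qed.

Lemma H_action : is_action mulH eH gam.
Proof.
split; [exact: valE | by move=> g h x; rewrite /gam valM | exact: gam_cont].
Qed.

Lemma H_equi : equiuniformity eH gam U.
Proof.
split => //.
  move=> g u Uu; have -> : gam g = alpha (rep g).
    by apply: funext => x; rewrite /gam repP.
  exact: sat.
move=> u Uu; have [w Uw sw] : exists2 w, U w & star_refines w u.
  by case: hU => _ _ _ [_ st _]; apply: st.
exists [set k : Hty | forall x, Eu w (sval eH x, sval k x)], w.
split => //; first exact: ball_nbhs.
move=> _ [V wV <-]; have [W uW sW] := sw V wV; exists W => //.
move=> z [k [y [Ok Vy ->]]]; apply: sW.
have [V' wV' [/= V'y V'ky]] := Ok y; rewrite /= act1 in V'y.
by exists V'; split => //; exists y.
Qed.


Lemma H_Gtych : G_tychonoff mulH invH eH gam.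
Proof.
split; first by split; [exact: H_topgroup | exact: hX | exact: H_action].
apply: (@K_exists X U hU hX Hty mulH eH gam).
- exact: valE.
- by move=> g h x; rewrite /gam valM.
- move=> h u Uu; have [w Uw hw] := act_unif (rep h) Uu.
  by exists w => // a b /hw; rewrite /gam (repP h).
- by move=> h0 u Uu; exact: ball_nbhs.
Qed.

Definition ballv (v : set (set X)) (a : Hty) : set Hty :=
  [set k : Hty | forall x, Eu v (sval a x, sval k x)].

Lemma chi_clause B : is_ubase U B -> exists L : set (set Hty),
  is_local_base eH L /\ ((L #<= B)%card \/ countable L).
Proof.
case=> BU Bb; exists [set interior (ballv u eH) | u in B].
split; last by left; exact: card_image_le.
split.
  move=> _ [u Bu <-]; split; first exact: open_interior.
  exact: (ball_nbhs eH (BU _ Bu)).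
move=> N /nbhsH [u' Uu' uN]; have [v Bv rv] := Bb u' Uu'.
exists (interior (ballv v eH)); first by exists v.
move=> k /interior_subset kv; apply: uN => x.
exact: (Eu_refine rv (kv x)).
Qed.

Lemma ib_clause (I : Type) (S : set I) : narrow mulG eG S -> narrow mulH eH S.
Proof.
move=> nG N nN; have nN' : nbhs eG (phi @^-1` N) by exact: phi_cont nN.
have [A [cA hA]] := nG _ nN'.
exists (phi @` A); split; first exact: card_le_trans (card_image_le phi A) cA.
move=> h; have [g <-] := phi_surj h; have [a [n [Aa Nn ->]]] := hA g.
exists (phi a), (phi n); split; [by exists a | by [] | by rewrite phiM].
Qed.

HB.instance Definition _ := isPointed.Build Hty eH.

Lemma inv1G : invG eG = eG.
Proof. by rewrite -[invG eG](mulg1' mA m1 mV) mV. Qed.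

Lemma cover_w (I : Type) (S : set I) w : narrow mulG eG S -> U w ->
  exists g : I -> Hty, forall h : Hty, exists2 s, S s &
    forall x, Eu w (sval (g s) x, sval h x).
Proof.
move=> nG Uw.
have nM := Mu_nbhs Uw; rewrite -inv1G in nM.
have hinv : continuous invG by case: hTG => _ _ _ [].
have nN : nbhs eG [set n | forall y, Eu w (y, alpha (invG n) y)].
  exact: (hinv eG _ nM).
have [A [cA hA]] := nG _ nN.
have cA' : ((fun a => phi (invG a)) @` A #<= S)%card.
  exact: card_le_trans (card_image_le _ A) cA.
have [g sg] := (@pcard_surjP Hty I _ S cA').
exists g => h; have [a [n [Aa Nn ea]]] := hA (invG (rep h)).
have [s Ss es] := sg _ (ex_intro2 _ _ a Aa erefl).
exists s => // x; rewrite es /= (repP h).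
have -> : rep h = mulG (invG n) (invG a).
  by rewrite -(invgM' mA m1 mV) -ea (invgK' mA m1 mV).
by rewrite actM; apply: Nn.
Qed.

Lemma w_clause B : is_ubase U B -> forall (I : Type) (S : set I),
  narrow mulG eG S -> exists BB : set (set Hty),
    is_top_base BB /\ (BB #<= B `*` S)%card.
Proof.
case=> BU Bb I S nG.
have : forall u : set (set X), exists v : set (set X), U u -> U v /\
    forall a b c, Eu v (a, b) -> Eu v (b, c) -> Eu u (a, c).
  move=> u; have [Uu|nUu] := pselect (U u); last by exists set0.
  by have [w Uw sw] := Eu_split hU Uu; exists w.
case/choice => vs hvs.
have : forall u : set (set X), exists g : I -> Hty, U u ->
    forall h : Hty, exists2 s, S s & forall x, Eu (vs (vs u)) (sval (g s) x, sval h x).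
  move=> u; have [Uu|nUu] := pselect (U u); last by exists (fun=> eH).
  have [Uv _] := hvs u Uu; have [Uw _] := hvs _ Uv.
  by have [g hg] := cover_w nG Uw; exists g.
case/choice => gs hgs.
pose Of (p : set (set X) * I) := interior (ballv (vs p.1) (gs p.1 p.2)).
exists (Of @` (B `*` S)); split; last exact: card_image_le.
split; first by move=> _ [p _ <-]; exact: open_interior.
move=> W oW h Wh.
have /nbhsH [u' Uu' uW] : nbhs h W by apply: open_nbhs_nbhs.
have [u Bu ru] := Bb u' Uu'; have Uu := BU _ Bu.
have [Uv sv] := hvs u Uu; have [Uw sw] := hvs _ Uv.
have [s Ss hs] := hgs u Uu h.
set a := gs u s; set v := vs u; set w := vs v.
have wv : forall p q, Eu w (p, q) -> Eu v (p, q).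
  by move=> p q hpq; apply: sw hpq (Eu_refl hU _ Uw).
exists (Of (u, s)); first by exists (u, s).
split.
  change (nbhs h (ballv v a)); apply/nbhsH; exists w => // k hk x.
  exact: sw (hs x) (hk x).
move=> k /interior_subset kv; apply: uW => x; apply: (Eu_refine ru).
exact: sv (Eu_sym (wv _ _ (hs x))) (kv x).
Qed.

Lemma final_main :
  exists (H : topologicalType) (mulH : H -> H -> H) (invH : H -> H) (eH : H)
         (gamma : H -> X -> X) (phi : G -> H),
    [/\ G_tychonoff mulH invH eH gamma,
        equiuniformity eH gamma U,
        (* chi(H) <= w(U) *)
        (forall B, is_ubase U B -> exists L : set (set H),
           is_local_base eH L /\ ((L #<= B)%card \/ countable L)),
        (* ib(H) <= ib(G) *)
        (forall (I : Type) (S : set I), infinite_set S ->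
           narrow mulG eG S -> narrow mulH eH S) &
        (* w(H) <= w(U) . ib(G) *)
        (forall B, is_ubase U B -> forall (I : Type) (S : set I), infinite_set S ->
           narrow mulG eG S -> exists BB : set (set H),
             is_top_base BB /\ (BB #<= B `*` S)%card)] /\
        [/\ continuous phi,
            (forall g h, phi (mulG g h) = mulH (phi g) (phi h)),
            (forall h, exists g, phi g = h) &
            (forall g x, alpha g x = gamma (phi g) x)].
Proof.
exists Hty, mulH, invH, eH, gam, phi.
split; split.
- exact: H_Gtych.
- exact: H_equi.
- exact: chi_clause.
- by move=> I S _; exact: ib_clause.
- by move=> B bB I S _; exact: w_clause.
- exact: phi_cont.
- exact: phiM.
- exact: phi_surj.
- exact: phi_equiv.
Qed.

End main.

Theorem theorem3p11 (G : topologicalType) (mulG : G -> G -> G) (invG : G -> G)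
  (eG : G) (X : topologicalType) (alpha : G -> X -> X) (U : set (set (set X))) :
  G_tychonoff mulG invG eG alpha ->
  equiuniformity eG alpha U ->
  exists (H : topologicalType) (mulH : H -> H -> H) (invH : H -> H) (eH : H)
         (gamma : H -> X -> X) (phi : G -> H),
    [/\ G_tychonoff mulH invH eH gamma,
        equiuniformity eH gamma U,
        (* chi(H) <= w(U) *)
        (forall B, is_ubase U B -> exists L : set (set H),
           is_local_base eH L /\ ((L #<= B)%card \/ countable L)),
        (* ib(H) <= ib(G) *)
        (forall (I : Type) (S : set I), infinite_set S ->
           narrow mulG eG S -> narrow mulH eH S) &
        (* w(H) <= w(U) . ib(G) *)
        (forall B, is_ubase U B -> forall (I : Type) (S : set I), infinite_set S ->
           narrow mulG eG S -> exists BB : set (set H),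
             is_top_base BB /\ (BB #<= B `*` S)%card)] /\
        (* (phi, id) equivariant pair, phi a continuous epimorphism *)
        [/\ continuous phi,
            (forall g h, phi (mulG g h) = mulH (phi g) (phi h)),
            (forall h, exists g, phi g = h) &
            (forall g x, alpha g x = gamma (phi g) x)].
Proof.
move=> [[hTG hX hact] _] hEq.
exact: (final_main hTG hact hX hEq).
Qed.
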